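(* Let $\mu>0$, $\tau>0$, $\kappa>0$, $n\in\mathbb N=\{0,1,2,\dots\}$ be fixed, and for $\alpha>0$ and $\lambda\in\mathbb C$ with $\operatorname{Re}\lambda>-(\mu+\kappa)$ let $$\Delta(\lambda,\alpha)=1-(1-\ln\alpha)\,e^{-\lambda\tau}\Big(1+\frac{\lambda}{\mu+\kappa}\Big)^{-n-1}.$$ Then $\Delta(\pm i\omega,\alpha)=0$ for some $\omega>0$ if and only if $\omega$ solves $$\omega\tau+(n+1)\arctan\frac{\omega}{\mu+\kappa}=\pi+2k\pi\ \text{ for some }k\in\mathbb N,\qquad\text{and}\qquad \alpha=\exp\Big(1+\Big(1+\frac{\omega^2}{(\mu+\kappa)^2}\Big)^{\frac{n+1}{2}}\Big).$$ Furthermore, for each $k\in\mathbb N$ the first equation has exactly one solution $\omega_k>0$, so that $\Delta(\cdot,\alpha)$ has exactly one pair of purely imaginary roots $\pm i\omega_k$ for $\alpha=\alpha_k:=\exp\big(1+(1+\omega_k^2/(\mu+\kappa)^2)^{(n+1)/2}\big)$; moreover $\omega_k\to+\infty$ and $\alpha_k\to+\infty$ as $k\to+\infty$. Finally, for fixed $k\in\mathbb N$, writing $\omega_k(n)$ and $\alpha_k(n)$ for these quantities as functions of $n\in\mathbb N$ (other parameters fixed), $\omega_k(n)\to0$ and $\alpha_k(n)\to e^2$ as $n\to+\infty$.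
   Context: $\Delta$ is the characteristic function of the linearization at the positive equilibrium $\bar u(a)=\ln(\alpha)e^{-\mu a}$ of the age-structured model $\partial_tu+\partial_au=-\mu u$, $u(t,0)=\alpha\,f(\int_0^\infty\beta(a)u(t,a)\,da)$ with $f(x)=xe^{-x}$ and birth function $\beta(a)=C_0(a-\tau)^ne^{-\kappa(a-\tau)}\mathbf 1_{[\tau,\infty)}(a)$, $C_0>0$ chosen so that $\int_0^\infty\beta(a)e^{-\mu a}\,da=1$; indeed $\Delta(\lambda,\alpha)=1-(1-\ln\alpha)\int_0^\infty\beta(a)e^{-(\lambda+\mu)a}\,da$. *)

(* Defs.v *)
From Stdlib Require Import Reals.
From Coquelicot Require Import Coquelicot.
Open Scope R_scope.

Definition cexp (z : C) : C :=
  (exp (Re z) * cos (Im z), exp (Re z) * sin (Im z)).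

Fixpoint cpow (z : C) (m : nat) : C :=
  match m with
  | O => RtoC 1
  | S m' => Cmult z (cpow z m')
  end.

Definition DeltaC (mu tau kappa : R) (n : nat) (lam : C) (alpha : R) : C :=
  Cminus (RtoC 1)
    (Cmult (Cmult (RtoC (1 - ln alpha)) (cexp (Cmult (Copp lam) (RtoC tau))))
       (Cinv (cpow (Cplus (RtoC 1) (Cdiv lam (RtoC (mu + kappa)))) (n + 1)))).

Definition iR (w : R) : C := (0, w).

Definition phase_eq (mu tau kappa : R) (n : nat) (w : R) (k : nat) : Prop :=
  w * tau + INR (n + 1) * atan (w / (mu + kappa)) = PI + 2 * INR k * PI.

Definition alpha_of (mu kappa : R) (n : nat) (w : R) : R :=
  exp (1 + Rpower (1 + w ^ 2 / (mu + kappa) ^ 2) (INR (n + 1) / 2)).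

(* Main.v *)
Require Import Defs.
From Stdlib Require Import Reals Lra Lia Psatz ZArith.
From Coquelicot Require Import Coquelicot.
Open Scope R_scope.

Lemma Cminus_0 (a b : C) : Cminus a b = RtoC 0 -> a = b.
Proof.
  destruct a as [a1 a2], b as [b1 b2]; unfold Cminus, Cplus, Copp, RtoC; simpl.
  intro H; injection H; intros; f_equal; lra.
Qed.

Lemma cexp_im (w tau : R) :
  cexp (Cmult (Copp (iR w)) (RtoC tau)) = (cos (w * tau), - sin (w * tau)).
Proof.
  unfold cexp, iR, RtoC, Cmult, Copp; simpl.
  replace (- 0 * tau - - w * 0) with 0 by ring.
  replace (- 0 * 0 + - w * tau) with (- (w * tau)) by ring.
  rewrite exp_0, cos_neg, sin_neg; f_equal; ring.
Qed.

Lemma div_iR (w c : R) : c <> 0 -> Cdiv (iR w) (RtoC c) = (0, w / c).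
Proof.
  intro Hc; unfold Cdiv, Cinv, Cmult, iR, RtoC; simpl.
  f_equal; field; auto.
Qed.

Lemma polar1 (t : R) :
  Cplus (RtoC 1) (0, t) = (sqrt (1 + t * t) * cos (atan t), sqrt (1 + t * t) * sin (atan t)).
Proof.
  rewrite cos_atan, sin_atan. unfold Rsqr.
  assert (H : 0 < sqrt (1 + t * t)) by (apply sqrt_lt_R0; nra).
  unfold Cplus, RtoC; simpl. f_equal; field; lra.
Qed.

Lemma cpow_polar (r th : R) (m : nat) :
  cpow (r * cos th, r * sin th) m = (r ^ m * cos (INR m * th), r ^ m * sin (INR m * th)).
Proof.
  induction m as [|m IH]; simpl cpow.
  - simpl. rewrite Rmult_0_l, cos_0, sin_0. unfold RtoC; f_equal; ring.
  - rewrite IH, S_INR. replace ((INR m + 1) * th) with (th + INR m * th) by ring.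
    rewrite cos_plus, sin_plus. unfold Cmult; simpl. f_equal; ring.
Qed.


Definition phi (mu tau kappa : R) (n : nat) (w : R) :=
  w * tau + INR (n + 1) * atan (w / (mu + kappa)).
Definition Rm (mu kappa : R) (n : nat) (w : R) :=
  sqrt (1 + (w / (mu + kappa)) * (w / (mu + kappa))) ^ (n + 1).

Lemma Rm_pos mu kappa n w : 0 < Rm mu kappa n w.
Proof. unfold Rm. apply pow_lt. apply sqrt_lt_R0. nra. Qed.

Lemma real_polar (beta R a b : R) : 0 < R ->
  (beta * cos a = R * cos b /\ - (beta * sin a) = R * sin b) <->
  (R * cos (a + b) = beta /\ sin (a + b) = 0).
Proof.
  intro HR. pose proof (sin2_cos2 a) as Ha. unfold Rsqr in Ha. split.
  - intros [H1 H2]. rewrite cos_plus, sin_plus. split.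
    + replace (R * (cos a * cos b - sin a * sin b)) with (cos a * (R * cos b) - sin a * (R * sin b)) by ring.
      rewrite <- H1, <- H2.
      transitivity (beta * (sin a * sin a + cos a * cos a)); [ring | rewrite Ha; ring].
    + apply (Rmult_eq_reg_l R); [| lra].
      replace (R * (sin a * cos b + cos a * sin b)) with (sin a * (R * cos b) + cos a * (R * sin b)) by ring.
      rewrite <- H1, <- H2. ring.
  - intros [H1 H2]. replace b with ((a + b) - a) by ring.
    rewrite cos_minus, sin_minus, H2. split.
    + rewrite <- H1. ring.
    + rewrite <- H1. ring.
Qed.

Lemma Delta_zero_iff mu tau kappa n w alpha : 0 < mu + kappa ->
  DeltaC mu tau kappa n (iR w) alpha = RtoC 0 <->
  (Rm mu kappa n w * cos (phi mu tau kappa n w) = 1 - ln alpha /\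
   sin (phi mu tau kappa n w) = 0).
Proof.
  intro Hc. unfold DeltaC. rewrite div_iR by lra. rewrite polar1, cpow_polar, cexp_im.
  unfold phi. rewrite <- (real_polar (1 - ln alpha)) by apply Rm_pos.
  fold (Rm mu kappa n w).
  set (R := Rm mu kappa n w). set (th := INR (n+1) * atan (w / (mu+kappa))).
  set (beta := 1 - ln alpha).
  assert (HR : 0 < R) by apply Rm_pos.
  assert (HP : (R * cos th, R * sin th) <> RtoC 0).
  { intro H. injection H. intros H1 H2. pose proof (sin2_cos2 th). unfold Rsqr in *.
    apply Rmult_integral in H1; apply Rmult_integral in H2. nra. }
  split.
  - intro H. apply Cminus_0 in H.
    assert (E : Cmult (RtoC beta) (cos (w * tau), - sin (w * tau)) = (R * cos th, R * sin th)).
    { rewrite <- (Cmult_1_l (R * cos th, R * sin th)). rewrite H. field. auto. }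
    unfold Cmult, RtoC in E; simpl in E. injection E. intros. split; lra.
  - intros [H1 H2].
    assert (E : Cmult (RtoC beta) (cos (w * tau), - sin (w * tau)) = (R * cos th, R * sin th)).
    { unfold Cmult, RtoC; simpl. f_equal; lra. }
    rewrite E. field. auto.
Qed.


Lemma Rm_alpha mu kappa n w : 0 < mu + kappa ->
  alpha_of mu kappa n w = exp (1 + Rm mu kappa n w).
Proof.
  intro Hc. unfold alpha_of, Rm. f_equal. f_equal.
  set (A := 1 + w / (mu + kappa) * (w / (mu + kappa))).
  assert (HA : 0 < A) by (unfold A; nra).
  replace (1 + w ^ 2 / (mu + kappa) ^ 2) with A by (unfold A; field; lra).
  rewrite <- Rpower_pow by (apply sqrt_lt_R0; lra).
  rewrite <- Rpower_sqrt by lra. rewrite Rpower_mult. f_equal. field.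
Qed.

Lemma Rm_gt1 mu kappa n w : 0 < mu + kappa -> w <> 0 -> 1 < Rm mu kappa n w.
Proof.
  intros Hc Hw. unfold Rm. apply Rlt_pow_R1; [| lia].
  assert (Ht : w / (mu + kappa) <> 0) by (unfold Rdiv; apply Rmult_integral_contrapositive; split; [auto | apply Rinv_neq_0_compat; lra]).
  set (t := w / (mu + kappa)) in *.
  pose proof (Rsqr_pos_lt t Ht); unfold Rsqr in *.
  assert (H1 : sqrt 1 < sqrt (1 + t * t)) by (apply sqrt_lt_1_alt; lra).
  rewrite sqrt_1 in H1. exact H1.
Qed.

Lemma Rm_opp mu kappa n w : Rm mu kappa n (- w) = Rm mu kappa n w.
Proof. unfold Rm. f_equal. f_equal. unfold Rdiv. ring. Qed.

Lemma phi_opp mu tau kappa n w : 0 < mu + kappa ->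
  phi mu tau kappa n (- w) = - phi mu tau kappa n w.
Proof.
  intro Hc. unfold phi. replace (- w / (mu + kappa)) with (- (w / (mu + kappa))) by (field; lra).
  rewrite atan_opp. ring.
Qed.

Lemma phi_pos mu tau kappa n w : 0 < mu + kappa -> 0 < tau -> 0 < w ->
  0 < phi mu tau kappa n w.
Proof.
  intros Hc Ht Hw. unfold phi.
  assert (0 < atan (w / (mu + kappa))).
  { rewrite <- atan_0. apply atan_increasing. apply Rdiv_lt_0_compat; lra. }
  assert (0 < INR (n + 1)) by (apply lt_0_INR; lia).
  nra.
Qed.

Lemma cos_npi (N : nat) : cos (INR N * PI) = (-1) ^ N.
Proof.
  induction N as [|N IH].
  - simpl. rewrite Rmult_0_l. apply cos_0.
  - rewrite S_INR. replace ((INR N + 1) * PI) with (INR N * PI + PI) by ring.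
    rewrite neg_cos, IH. simpl. ring.
Qed.

Lemma phase_from (x : R) : 0 < x -> sin x = 0 -> cos x = -1 ->
  exists k : nat, x = PI + 2 * INR k * PI.
Proof.
  intros Hx Hs Hc. destruct (sin_eq_0_0 x Hs) as [z Hz].
  assert (Hzp : (0 < z)%Z).
  { apply lt_IZR. pose proof PI_RGT_0. subst x. nra. }
  assert (HzN : IZR z = INR (Z.to_nat z)).
  { rewrite INR_IZR_INZ. rewrite Z2Nat.id by lia. reflexivity. }
  rewrite HzN in Hz. subst x. rewrite cos_npi in Hc.
  destruct (Nat.Even_or_Odd (Z.to_nat z)) as [[j Hj]|[j Hj]]; rewrite Hj in *.
  - rewrite pow_1_even in Hc. lra.
  - exists j. replace (2 * j + 1)%nat with (S (2 * j)) by lia. rewrite S_INR, mult_INR. simpl. ring.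
Qed.

Lemma part1 mu tau kappa n alpha w : 0 < mu + kappa -> 0 < tau -> 1 < alpha -> 0 < w ->
  (DeltaC mu tau kappa n (iR w) alpha = RtoC 0 /\
   DeltaC mu tau kappa n (iR (- w)) alpha = RtoC 0)
  <-> ((exists k : nat, phase_eq mu tau kappa n w k) /\ alpha = alpha_of mu kappa n w).
Proof.
  intros Hc Ht Ha Hw.
  rewrite !Delta_zero_iff by lra. rewrite Rm_opp, phi_opp by lra.
  rewrite cos_neg, sin_neg.
  pose proof (Rm_gt1 mu kappa n w Hc ltac:(lra)) as HR.
  pose proof (phi_pos mu tau kappa n w Hc Ht Hw) as Hp.
  rewrite Rm_alpha by lra.
  set (R := Rm mu kappa n w) in *. set (p := phi mu tau kappa n w) in *.
  unfold phase_eq. fold (phi mu tau kappa n w). fold p.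
  split.
  - intros [[H1 H2] _].
    pose proof (sin2_cos2 p) as Hsc. unfold Rsqr in Hsc. rewrite H2 in Hsc.
    assert (Hcos : cos p = 1 \/ cos p = -1) by (assert ((cos p - 1) * (cos p + 1) = 0) by nra;
       apply Rmult_integral in H; lra).
    destruct Hcos as [Hcos | Hcos].
    + assert (ln alpha > 0) by (rewrite <- ln_1; apply ln_increasing; lra). rewrite Hcos in H1. lra.
    + split.
      * apply phase_from; auto.
      * rewrite Hcos in H1. replace (1 + R) with (ln alpha) by lra. rewrite exp_ln; lra.
  - intros [[k Hk] Hal].
    assert (Hcos : cos p = -1) by (rewrite Hk, cos_period; apply cos_PI).
    assert (Hsin : sin p = 0) by (rewrite Hk, sin_period; apply sin_PI).
    rewrite Hcos, Hsin, Hal, ln_exp. split; split; lra.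
Qed.


Lemma phi_incr mu tau kappa n w1 w2 : 0 < mu + kappa -> 0 < tau -> w1 < w2 ->
  phi mu tau kappa n w1 < phi mu tau kappa n w2.
Proof.
  intros Hc Ht H. unfold phi.
  assert (atan (w1 / (mu + kappa)) < atan (w2 / (mu + kappa))).
  { apply atan_increasing. unfold Rdiv. apply Rmult_lt_compat_r; [apply Rinv_0_lt_compat|]; lra. }
  assert (0 < INR (n + 1)) by (apply lt_0_INR; lia).
  nra.
Qed.

Lemma root_ex mu tau kappa n k : 0 < mu + kappa -> 0 < tau ->
  {w : R | 0 < w /\ phase_eq mu tau kappa n w k}.
Proof.
  intros Hc Ht.
  set (T := PI + 2 * INR k * PI).
  assert (HT : 0 < T) by (unfold T; pose proof PI_RGT_0; pose proof (pos_INR k); nra).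
  set (f := fun w => phi mu tau kappa n w - T).
  assert (Hf : continuity f).
  { intro x. unfold f, phi. apply continuity_pt_filterlim.
    apply (ex_derive_continuous (V := R_NormedModule)
      (fun w => w * tau + INR (n + 1) * atan (w / (mu + kappa)) - T)).
    auto_derive. lra. }
  assert (Hy : 0 < T / tau + 1) by (apply Rplus_lt_0_compat; [apply Rdiv_lt_0_compat|]; lra).
  destruct (IVT f 0 (T / tau + 1) Hf Hy) as [z [Hz1 Hz2]].
  - unfold f, phi. rewrite Rmult_0_l, Rdiv_0_l, atan_0. lra.
  - unfold f. pose proof (phi_pos mu tau kappa n (T / tau + 1) Hc Ht Hy).
    unfold phi in *.
    assert (0 < atan ((T / tau + 1) / (mu + kappa))).
    { rewrite <- atan_0. apply atan_increasing. apply Rdiv_lt_0_compat; lra. }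
    assert (0 < INR (n + 1)) by (apply lt_0_INR; lia).
    replace ((T / tau + 1) * tau) with (T + tau) by (field; lra). nra.
  - exists z. unfold f in Hz2. split.
    + destruct Hz1 as [Hz1 _]. destruct (Rle_lt_or_eq_dec 0 z Hz1) as [H|H]; auto.
      subst z. unfold phi in Hz2. rewrite Rmult_0_l, Rdiv_0_l, atan_0 in Hz2. lra.
    + unfold phase_eq. fold (phi mu tau kappa n z). unfold T in Hz2. lra.
Qed.

Lemma phase_unique mu tau kappa n k w1 w2 : 0 < mu + kappa -> 0 < tau ->
  phase_eq mu tau kappa n w1 k -> phase_eq mu tau kappa n w2 k -> w1 = w2.
Proof.
  intros Hc Ht H1 H2. unfold phase_eq in *. fold (phi mu tau kappa n w1) in H1.
  fold (phi mu tau kappa n w2) in H2.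
  destruct (Rtotal_order w1 w2) as [H|[H|H]]; auto.
  - pose proof (phi_incr mu tau kappa n _ _ Hc Ht H). lra.
  - pose proof (phi_incr mu tau kappa n _ _ Hc Ht H). lra.
Qed.


Lemma pow_lt_strict (x y : R) (m : nat) : 0 <= x < y -> x ^ (S m) < y ^ (S m).
Proof.
  intros [H0 H1]. induction m as [|m IH].
  - simpl. lra.
  - change (x * x ^ S m < y * y ^ S m).
    assert (0 <= x ^ S m) by (apply pow_le; lra). nra.
Qed.

Lemma Rm_lt mu kappa n w1 w2 : 0 < mu + kappa -> 0 <= w1 < w2 ->
  Rm mu kappa n w1 < Rm mu kappa n w2.
Proof.
  intros Hc [H1 H2]. unfold Rm. rewrite Nat.add_1_r. apply pow_lt_strict. split.
  - apply sqrt_pos.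
  - apply sqrt_lt_1_alt. assert (0 <= w1 / (mu + kappa)) by (apply Rdiv_le_0_compat; lra).
    assert (w1 / (mu + kappa) < w2 / (mu + kappa)) by (unfold Rdiv; apply Rmult_lt_compat_r; [apply Rinv_0_lt_compat|]; lra).
    split; nra.
Qed.

Lemma alpha_inj mu kappa n w1 w2 : 0 < mu + kappa -> 0 < w1 -> 0 < w2 ->
  alpha_of mu kappa n w1 = alpha_of mu kappa n w2 -> w1 = w2.
Proof.
  intros Hc H1 H2 H. rewrite !Rm_alpha in H by lra. apply exp_inv in H.
  destruct (Rtotal_order w1 w2) as [h|[h|h]]; auto.
  - pose proof (Rm_lt mu kappa n w1 w2 Hc ltac:(lra)). lra.
  - pose proof (Rm_lt mu kappa n w2 w1 Hc ltac:(lra)). lra.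
Qed.

Lemma alpha_gt1 mu kappa n w : 0 < mu + kappa -> 1 < alpha_of mu kappa n w.
Proof.
  intro Hc. rewrite Rm_alpha by lra. rewrite <- exp_0 at 1. apply exp_increasing.
  pose proof (Rm_pos mu kappa n w). lra.
Qed.

Lemma Rm_ge mu kappa n w : 0 < mu + kappa -> 0 < w -> w / (mu + kappa) <= Rm mu kappa n w.
Proof.
  intros Hc Hw. unfold Rm.
  set (t := w / (mu + kappa)).
  assert (Ht : 0 < t) by (apply Rdiv_lt_0_compat; lra).
  assert (Hs1 : 1 <= sqrt (1 + t * t)).
  { rewrite <- sqrt_1 at 1. apply sqrt_le_1_alt. nra. }
  assert (Hs2 : t <= sqrt (1 + t * t)).
  { rewrite <- (sqrt_square t) at 1 by lra. apply sqrt_le_1_alt. lra. }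
  pose proof (Rle_pow (sqrt (1 + t * t)) 1 (n + 1) Hs1 ltac:(lia)). simpl in H. lra.
Qed.

Lemma t_bound mu tau kappa n k w : 0 < mu + kappa -> 0 < tau -> 0 < w ->
  phase_eq mu tau kappa n w k ->
  (PI + 2 * INR k * PI) / INR (n + 1) <= 1 ->
  w / (mu + kappa) <= ((PI + 2 * INR k * PI) / cos 1) / INR (n + 1).
Proof.
  intros Hc Ht Hw Hp HK. unfold phase_eq in Hp.
  set (K := PI + 2 * INR k * PI) in *. set (m := INR (n + 1)) in *.
  assert (Hm : 0 < m) by (apply lt_0_INR; lia).
  set (y := atan (w / (mu + kappa))) in *.
  assert (Hy0 : 0 < y).
  { unfold y. rewrite <- atan_0. apply atan_increasing. apply Rdiv_lt_0_compat; lra. }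
  assert (Hy : y < K / m).
  { apply (Rmult_lt_reg_l m); auto. replace (m * (K / m)) with K by (field; lra). nra. }
  assert (Hc1 : 0 < cos 1) by (apply cos_gt_0; pose proof PI2_1; lra).
  assert (Hcy : cos 1 <= cos y).
  { destruct (Req_dec y 1) as [e|e]; [rewrite e; lra|].
    left. apply cos_decreasing_1; try lra; pose proof PI2_1; lra. }
  rewrite <- (tan_atan (w / (mu + kappa))). fold y. unfold tan.
  pose proof (sin_lt_x y Hy0).
  assert (sin y / cos y <= y / cos 1).
  { apply (Rmult_le_reg_r (cos y * cos 1)). nra.
    replace (sin y / cos y * (cos y * cos 1)) with (sin y * cos 1) by (field; lra).
    replace (y / cos 1 * (cos y * cos 1)) with (y * cos y) by (field; lra). nra. }
  assert (y / cos 1 <= K / cos 1 / m).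
  { replace (K / cos 1 / m) with ((K / m) / cos 1) by (field; lra).
    unfold Rdiv at 1 2. apply Rmult_le_compat_r; [left; apply Rinv_0_lt_compat; lra | lra]. }
  lra.
Qed.


Lemma exp_le' x y : x <= y -> exp x <= exp y.
Proof. intro H. destruct H as [H|H]; [left; apply exp_increasing; auto | subst; lra]. Qed.

Lemma exp_pow' a N : exp a ^ N = exp (INR N * a).
Proof.
  induction N as [|N IH].
  - simpl. rewrite Rmult_0_l, exp_0. reflexivity.
  - rewrite S_INR. simpl. rewrite IH. rewrite <- exp_plus. f_equal. ring.
Qed.

Lemma INR_ev (M : R) : eventually (fun n : nat => M < INR n).
Proof. pose proof is_lim_seq_INR as H. apply is_lim_seq_spec in H. apply H. Qed.

Lemma lim_k mu tau kappa n (om : nat -> R) : 0 < mu + kappa -> 0 < tau ->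
  (forall k, 0 < om k /\ phase_eq mu tau kappa n (om k) k) ->
  is_lim_seq om p_infty.
Proof.
  intros Hc Ht Hom. apply is_lim_seq_spec. intro M.
  pose proof PI_RGT_0 as Hpi.
  apply (filter_imp (fun k => (M * tau + INR (n + 1) * (PI / 2)) / (2 * PI) < INR k)); [| apply INR_ev].
  intros k Hk. destruct (Hom k) as [H0 Hp]. unfold phase_eq in Hp.
  pose proof (atan_bound (om k / (mu + kappa))) as [_ Hb].
  assert (0 < INR (n + 1)) by (apply lt_0_INR; lia).
  assert (Hk' : M * tau + INR (n + 1) * (PI / 2) < INR k * (2 * PI)).
  { apply (Rmult_lt_compat_r (2 * PI)) in Hk; [| lra].
    replace ((M * tau + INR (n + 1) * (PI / 2)) / (2 * PI) * (2 * PI)) with (M * tau + INR (n + 1) * (PI / 2)) in Hk by (field; lra). lra. }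
  apply (Rmult_lt_reg_r tau); auto. nra.
Qed.

Lemma lim_alpha_k mu tau kappa n (om : nat -> R) : 0 < mu + kappa -> 0 < tau ->
  (forall k, 0 < om k /\ phase_eq mu tau kappa n (om k) k) ->
  is_lim_seq (fun k => alpha_of mu kappa n (om k)) p_infty.
Proof.
  intros Hc Ht Hom. pose proof (lim_k mu tau kappa n om Hc Ht Hom) as H.
  apply is_lim_seq_spec in H. apply is_lim_seq_spec. intro M.
  apply (filter_imp (fun k => M * (mu + kappa) < om k)); [| apply H].
  intros k Hk. destruct (Hom k) as [H0 _].
  rewrite Rm_alpha by lra. pose proof (Rm_ge mu kappa n (om k) Hc H0).
  pose proof (exp_ineq1_le (1 + Rm mu kappa n (om k))).
  assert (M < om k / (mu + kappa)).
  { apply (Rmult_lt_reg_r (mu + kappa)); auto. replace (om k / (mu + kappa) * (mu + kappa)) with (om k) by (field; lra). lra. }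
  lra.
Qed.

Lemma lim_n_omega mu tau kappa k (om : nat -> R) : 0 < mu + kappa -> 0 < tau ->
  (forall n, 0 < om n /\ phase_eq mu tau kappa n (om n) k) ->
  is_lim_seq om 0.
Proof.
  intros Hc Ht Hom. apply is_lim_seq_spec. intro eps.
  set (K := PI + 2 * INR k * PI).
  assert (HK : 0 < K) by (unfold K; pose proof PI_RGT_0; pose proof (pos_INR k); nra).
  assert (Hc1 : 0 < cos 1) by (apply cos_gt_0; pose proof PI2_1; lra).
  set (E := K / cos 1).
  assert (HE : 0 < E) by (apply Rdiv_lt_0_compat; lra).
  pose proof (cond_pos eps) as He.
  apply (filter_imp (fun n => K + (mu + kappa) * E / eps < INR n)); [| apply INR_ev].
  intros n Hn. destruct (Hom n) as [H0 Hp].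
  assert (Hm : INR (n + 1) = INR n + 1) by (rewrite plus_INR; simpl; ring).
  assert (Hq : 0 < (mu + kappa) * E / eps) by (apply Rdiv_lt_0_compat; nra).
  assert (HKm : K / INR (n + 1) <= 1).
  { rewrite Hm. apply (Rmult_le_reg_r (INR n + 1)); [lra|].
    replace (K / (INR n + 1) * (INR n + 1)) with K by (field; lra). lra. }
  pose proof (t_bound mu tau kappa n k (om n) Hc Ht H0 Hp HKm) as Hb. fold K E in Hb.
  rewrite Hm in Hb.
  rewrite Rminus_0_r, Rabs_pos_eq by lra.
  assert (Hb' : om n <= (mu + kappa) * E / (INR n + 1)).
  { apply (Rmult_le_compat_l (mu + kappa)) in Hb; [| lra].
    replace ((mu + kappa) * (om n / (mu + kappa))) with (om n) in Hb by (field; lra).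
    replace ((mu + kappa) * E / (INR n + 1)) with ((mu + kappa) * (E / (INR n + 1))) by (field; lra). exact Hb. }
  assert ((mu + kappa) * E / (INR n + 1) < eps).
  { apply (Rmult_lt_reg_r (INR n + 1)); [lra|].
    replace ((mu + kappa) * E / (INR n + 1) * (INR n + 1)) with ((mu + kappa) * E) by (field; lra).
    assert ((mu + kappa) * E / eps < INR n + 1) by lra.
    apply (Rmult_lt_compat_l eps) in H; [| lra].
    replace (eps * ((mu + kappa) * E / eps)) with ((mu + kappa) * E) in H by (field; lra). lra. }
  lra.
Qed.


Lemma Rm_upper mu kappa n w : 0 < mu + kappa ->
  Rm mu kappa n w <= exp (INR (n + 1) * ((w / (mu + kappa)) * (w / (mu + kappa)))).
Proof.
  intro Hc. unfold Rm. set (t := w / (mu + kappa)).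
  rewrite <- exp_pow'. apply pow_incr. split; [apply sqrt_pos|].
  assert (H1 : 1 <= 1 + t * t) by nra.
  apply Rle_trans with (1 + t * t).
  - rewrite <- (sqrt_square (1 + t * t)) at 2 by lra. apply sqrt_le_1_alt. nra.
  - apply exp_ineq1_le.
Qed.

Lemma lim_n_alpha mu tau kappa k (om : nat -> R) : 0 < mu + kappa -> 0 < tau ->
  (forall n, 0 < om n /\ phase_eq mu tau kappa n (om n) k) ->
  is_lim_seq (fun n => alpha_of mu kappa n (om n)) (exp 2).
Proof.
  intros Hc Ht Hom.
  set (K := PI + 2 * INR k * PI).
  assert (HK : 0 < K) by (unfold K; pose proof PI_RGT_0; pose proof (pos_INR k); nra).
  assert (Hc1 : 0 < cos 1) by (apply cos_gt_0; pose proof PI2_1; lra).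
  set (E := K / cos 1).
  assert (HE : 0 < E) by (apply Rdiv_lt_0_compat; lra).
  apply (is_lim_seq_ext (fun n => exp (1 + Rm mu kappa n (om n)))).
  { intro n. symmetry. apply Rm_alpha. lra. }
  replace (exp 2) with ((fun x => exp (1 + x)) 1) by (simpl; f_equal; ring).
  apply (is_lim_seq_continuous (fun x => exp (1 + x))).
  { apply continuity_pt_filterlim.
    apply (ex_derive_continuous (V := R_NormedModule) (fun x => exp (1 + x))). auto_derive. auto. }
  set (u := fun n : nat => E * E / INR (n + 1)).
  assert (Hu : is_lim_seq u 0).
  { apply is_lim_seq_spec. intro eps. pose proof (cond_pos eps) as He.
    apply (filter_imp (fun n => E * E / eps < INR n)); [| apply INR_ev].
    intros n Hn. unfold u. rewrite plus_INR. simpl INR.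
    assert (0 < E * E / eps) by (apply Rdiv_lt_0_compat; nra).
    rewrite Rminus_0_r, Rabs_pos_eq by (apply Rdiv_le_0_compat; nra).
    apply (Rmult_lt_reg_r (INR n + 1)); [lra|].
    replace (E * E / (INR n + 1) * (INR n + 1)) with (E * E) by (field; lra).
    apply (Rmult_lt_compat_l eps) in Hn; [| lra].
    replace (eps * (E * E / eps)) with (E * E) in Hn by (field; lra). nra. }
  assert (Hu' : is_lim_seq (fun n => exp (u n)) 1).
  { rewrite <- exp_0. apply (is_lim_seq_continuous exp); auto.
    apply derivable_continuous_pt, derivable_pt_exp. }
  apply (is_lim_seq_le_le_loc (fun _ => 1) _ (fun n => exp (u n))); [| apply is_lim_seq_const | exact Hu'].
  apply (filter_imp (fun n => K < INR n)); [| apply INR_ev].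
  intros n Hn. destruct (Hom n) as [H0 Hp]. split.
  - left. apply Rm_gt1; lra.
  - assert (Hm : INR (n + 1) = INR n + 1) by (rewrite plus_INR; simpl; ring).
    assert (HKm : K / INR (n + 1) <= 1).
    { rewrite Hm. apply (Rmult_le_reg_r (INR n + 1)); [lra|].
      replace (K / (INR n + 1) * (INR n + 1)) with K by (field; lra). lra. }
    pose proof (t_bound mu tau kappa n k (om n) Hc Ht H0 Hp HKm) as Hb. fold K E in Hb.
    apply Rle_trans with (1 := Rm_upper mu kappa n (om n) Hc).
    apply exp_le'. unfold u.
    set (t := om n / (mu + kappa)) in *. set (m := INR (n + 1)) in *.
    assert (Hm0 : 0 < m) by (rewrite Hm; pose proof (pos_INR n); lra).
    assert (Ht0 : 0 < t) by (unfold t; apply Rdiv_lt_0_compat; lra).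
    assert (Hmt : m * t <= E) by (apply (Rmult_le_compat_l m) in Hb; [| lra];
      replace (m * (E / m)) with E in Hb by (field; lra); exact Hb).
    apply (Rmult_le_reg_r m); auto.
    replace (E * E / m * m) with (E * E) by (field; lra).
    assert (0 <= m * t) by nra. nra.
Qed.

Theorem proposition7p2 (mu tau kappa : R)
  (Hmu : 0 < mu) (Htau : 0 < tau) (Hkappa : 0 < kappa) :
  (* characterisation of purely imaginary roots *)
  (forall (n : nat) (alpha w : R), 1 < alpha -> 0 < w ->
     (DeltaC mu tau kappa n (iR w) alpha = RtoC 0 /\
      DeltaC mu tau kappa n (iR (- w)) alpha = RtoC 0)
     <-> ((exists k : nat, phase_eq mu tau kappa n w k) /\
          alpha = alpha_of mu kappa n w))
  /\
  exists omega : nat -> nat -> R,   (* omega n k = omega_k(n) *)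
    (forall n k, 0 < omega n k /\ phase_eq mu tau kappa n (omega n k) k /\
       forall w, 0 < w -> phase_eq mu tau kappa n w k -> w = omega n k)
    /\
    (forall n k (w : R), 0 < w ->
       (DeltaC mu tau kappa n (iR w) (alpha_of mu kappa n (omega n k)) = RtoC 0 /\
        DeltaC mu tau kappa n (iR (- w)) (alpha_of mu kappa n (omega n k)) = RtoC 0)
       <-> w = omega n k)
    /\
    (forall n, is_lim_seq (fun k => omega n k) p_infty /\
               is_lim_seq (fun k => alpha_of mu kappa n (omega n k)) p_infty)
    /\
    (forall k, is_lim_seq (fun n => omega n k) 0 /\
               is_lim_seq (fun n => alpha_of mu kappa n (omega n k)) (exp 2)).
Proof.
  assert (Hc : 0 < mu + kappa) by lra.
  split.
  { intros n alpha w Ha Hw. apply part1; lra. }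
  set (om := fun n k => proj1_sig (root_ex mu tau kappa n k Hc Htau)).
  assert (Hom : forall n k, 0 < om n k /\ phase_eq mu tau kappa n (om n k) k).
  { intros n k. unfold om. exact (proj2_sig (root_ex mu tau kappa n k Hc Htau)). }
  exists om. split; [| split; [| split]].
  - intros n k. destruct (Hom n k) as [H0 H1]. split; auto. split; auto.
    intros w Hw Hpw. exact (phase_unique mu tau kappa n k w (om n k) Hc Htau Hpw H1).
  - intros n k w Hw. destruct (Hom n k) as [H0 H1].
    rewrite part1 by (try lra; apply alpha_gt1; lra). split.
    + intros [[k' Hk'] Ha]. symmetry. exact (alpha_inj mu kappa n (om n k) w Hc H0 Hw Ha).
    + intros ->. split; [exists k; exact H1 | reflexivity].
  - intro n. split.
    + apply (lim_k mu tau kappa n); auto.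
    + apply (lim_alpha_k mu tau kappa n); auto.
  - intro k. split.
    + apply (lim_n_omega mu tau kappa k (fun n => om n k)); auto.
    + apply (lim_n_alpha mu tau kappa k (fun n => om n k)); auto.
Qed.
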